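(* Let $A\subset\mathbb{R}^d$ have positive reach $\tau_A$, let $\bar\tau\in(0,\tau_A]$, and let $\mathbb{X}\subset A$ be a finite point sample that is $\delta$-dense in $A$ with $\delta<\bar\tau/4$. Let $x\in\mathbb{X}$, $\epsilon\in(0,\tau_A)$, $q\in A$, and $p\in B_\epsilon(x)\cap\mathrm{UP}(A,q)$. If $q\notin B_\epsilon(x)$, then the sphere $\partial B_\epsilon(x)$ meets the line segment $\overline{qp}$ in a unique point $y$, and $\|y-q\|\le\epsilon^2/\tau_A$.
   Context: For closed $A\subset\mathbb{R}^d$: $\mathrm{UP}(A)$ is the set of points with a unique nearest point in $A$, $\xi_A$ maps each such point to it, $\mathrm{UP}(A,q)=\{z\in\mathrm{UP}(A):\xi_A(z)=q\}$, $\mathrm{Med}(A)=\mathbb{R}^d\setminus\mathrm{UP}(A)$, reach $\tau_A=\inf_{a\in A}d(a,\mathrm{Med}(A))$. $\mathbb{X}$ is $\delta$-dense in $A$ if every point of $A$ is at distance $<\delta$ from a point of $\mathbb{X}$. $B_\epsilon(x)$ is the open Euclidean ball and $\partial B_\epsilon(x)$ its boundary sphere. *)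

(* Defs.v *)
(* R : realType, points of R^d are row vectors 'rV[R]_d
   equipped with the EUCLIDEAN norm defined below. *)
From mathcomp Require Import all_boot all_order all_algebra.
From mathcomp Require Import all_classical all_reals all_analysis.
Set Implicit Arguments. Unset Strict Implicit. Unset Printing Implicit Defensive.
Import Order.TTheory GRing.Theory Num.Theory.
Local Open Scope classical_set_scope.
Local Open Scope ring_scope.

Section Defs.
Variables (R : realType) (d : nat).
Local Notation V := 'rV[R]_d.

Definition edot (u v : V) : R := \sum_(i < d) u ord0 i * v ord0 i.
Definition enorm (u : V) : R := Num.sqrt (edot u u).

Definition nearest (A : set V) (z q : V) : Prop :=
  A q /\ forall a, A a -> enorm (z - q) <= enorm (z - a).

Definition UP (A : set V) : set V :=
  [set z | exists q, nearest A z q /\ forall q', nearest A z q' -> q' = q].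

Definition UPq (A : set V) (q : V) : set V :=
  [set z | nearest A z q /\ forall q', nearest A z q' -> q' = q].

Definition Med (A : set V) : set V := ~` UP A.

(* distance from a point to a set, in the extended reals (+oo for the empty set) *)
Definition edist (z : V) (S : set V) : \bar R :=
  ereal_inf [set (enorm (z - s))%:E | s in S].

Definition reach (A : set V) : \bar R := ereal_inf [set edist a (Med A) | a in A].

Definition eball (x : V) (eps : R) : set V := [set z | enorm (z - x) < eps].
Definition esphere (x : V) (eps : R) : set V := [set z | enorm (z - x) = eps].

Definition segment (q p : V) : set V :=
  [set y | exists2 t : R, 0 <= t <= 1 & y = (1 - t) *: q + t *: p].

Definition eclosed (A : set V) : Prop :=
  forall z, (forall e : R, 0 < e -> exists2 a, A a & enorm (z - a) < e) -> A z.

Definition dense_in (X A : set V) (delta : R) : Prop :=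
  forall a, A a -> exists2 x, X x & enorm (a - x) < delta.

End Defs.

(* Main.v *)
Require Import Defs.
From mathcomp Require Import all_boot all_order all_algebra.
From mathcomp Require Import all_classical all_reals all_analysis.
From mathcomp Require Import ring lra.
Import Order.TTheory GRing.Theory Num.Theory.
Import numFieldNormedType.Exports.
Local Open Scope classical_set_scope.
Local Open Scope ring_scope.

Section Eucl.
Variables (R : realType) (d : nat).
Local Notation V := 'rV[R]_d.
Local Notation dt := (@edot R d).
Local Notation nm := (@enorm R d).

Lemma edotC (u v : V) : dt u v = dt v u.
Proof. by apply: eq_bigr => i _; rewrite mulrC. Qed.

Lemma edotDl (u v w : V) : dt (u + v) w = dt u w + dt v w.
Proof. by rewrite /edot -big_split; apply: eq_bigr => i _; rewrite !mxE mulrDl. Qed.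

Lemma edotDr (u v w : V) : dt w (u + v) = dt w u + dt w v.
Proof. by rewrite edotC edotDl !(edotC w). Qed.

Lemma edotZl (a : R) (u v : V) : dt (a *: u) v = a * dt u v.
Proof. by rewrite /edot mulr_sumr; apply: eq_bigr => i _; rewrite !mxE mulrA. Qed.

Lemma edotZr (a : R) (u v : V) : dt v (a *: u) = a * dt v u.
Proof. by rewrite edotC edotZl edotC. Qed.

Lemma edotNl (u v : V) : dt (- u) v = - dt u v.
Proof. by rewrite -scaleN1r edotZl mulN1r. Qed.

Lemma edotNr (u v : V) : dt v (- u) = - dt v u.
Proof. by rewrite edotC edotNl edotC. Qed.

Lemma edotBl (u v w : V) : dt (u - v) w = dt u w - dt v w.
Proof. by rewrite edotDl edotNl. Qed.

Lemma edotBr (u v w : V) : dt w (u - v) = dt w u - dt w v.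
Proof. by rewrite edotDr edotNr. Qed.

Lemma edot0l (u : V) : dt 0 u = 0.
Proof. by rewrite /edot big1 // => i _; rewrite mxE mul0r. Qed.

Lemma edot0r (u : V) : dt u 0 = 0.
Proof. by rewrite edotC edot0l. Qed.

Lemma edot_ge0 (u : V) : 0 <= dt u u.
Proof. by apply: sumr_ge0 => i _; rewrite -expr2 sqr_ge0. Qed.

Lemma edot_eq0 (u : V) : dt u u = 0 -> u = 0.
Proof.
move=> /eqP; rewrite psumr_eq0; last by move=> i _; rewrite -expr2 sqr_ge0.
move=> /allP H; apply/rowP => i; rewrite mxE.
by have := H i (mem_index_enum i); rewrite implyTb mulf_eq0 orbb => /eqP.
Qed.

Lemma enorm_ge0 (u : V) : 0 <= nm u.
Proof. exact: sqrtr_ge0. Qed.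

Lemma enorm_sq (u : V) : nm u ^+ 2 = dt u u.
Proof. by rewrite sqr_sqrtr // edot_ge0. Qed.

Lemma enormE (u : V) : nm u = Num.sqrt (dt u u).
Proof. by []. Qed.

Lemma enorm0 : nm 0 = 0.
Proof. by rewrite /enorm edot0l sqrtr0. Qed.

Lemma enorm_eq0 (u : V) : nm u = 0 -> u = 0.
Proof. move=> h; apply: edot_eq0; by rewrite -enorm_sq h expr0n. Qed.

Lemma enormZ (a : R) (u : V) : nm (a *: u) = `|a| * nm u.
Proof.
rewrite /enorm edotZl edotZr mulrA -expr2 sqrtrM ?sqr_ge0 //.
by rewrite sqrtr_sqr.
Qed.

Lemma enormN (u : V) : nm (- u) = nm u.
Proof. by rewrite /enorm edotNl edotNr opprK. Qed.

Lemma enormB (u v : V) : nm (u - v) = nm (v - u).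
Proof. by rewrite -enormN opprB. Qed.

Lemma le_enorm (u v : V) : (nm u <= nm v) = (dt u u <= dt v v).
Proof. by rewrite /enorm ler_sqrt // edot_ge0. Qed.


Lemma CS_sq (u v : V) : dt u v ^+ 2 <= dt u u * dt v v.
Proof.
have [v0|vpos] := eqVneq (dt v v) 0.
  by rewrite (edot_eq0 _ v0) edot0r edot0l expr0n mulr0.
have h := edot_ge0 (dt v v *: u - dt u v *: v).
rewrite !(edotBl, edotBr, edotZl, edotZr) (edotC v u) in h.
have : 0 <= dt v v * (dt u u * dt v v - dt u v ^+ 2) by nra.
rewrite pmulr_rge0 ?subr_ge0 //.
by rewrite lt_neqAle eq_sym vpos edot_ge0.
Qed.

Lemma CS (u v : V) : dt u v <= nm u * nm v.
Proof.
rewrite /enorm -sqrtrM ?edot_ge0 //.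
apply: le_trans (ler_norm _) _.
by rewrite -sqrtr_sqr ler_sqrt ?CS_sq // mulr_ge0 // edot_ge0.
Qed.

Lemma enormD_sq (u v : V) : dt (u + v) (u + v) = dt u u + 2 * dt u v + dt v v.
Proof. rewrite !(edotDl, edotDr) (edotC v u); ring. Qed.

Lemma enormB_sq (u v : V) : dt (u - v) (u - v) = dt u u - 2 * dt u v + dt v v.
Proof. rewrite !(edotBl, edotBr) (edotC v u); ring. Qed.

Lemma enormD (u v : V) : nm (u + v) <= nm u + nm v.
Proof.
rewrite -(ler_pXn2r (_ : 0 < 2)%N) ?nnegrE ?addr_ge0 ?enorm_ge0 //.
rewrite enorm_sq enormD_sq sqrrD !enorm_sq.
have := CS u v; lra.
Qed.


Lemma coord_le (u : V) i : `|u ord0 i| <= nm u.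
Proof.
rewrite -sqrtr_sqr /enorm ler_sqrt ?edot_ge0 //.
rewrite /edot (bigD1 i) //= -expr2 lerDl.
by apply: sumr_ge0 => j _; rewrite -expr2 sqr_ge0.
Qed.

Lemma mx_le_enorm (u : V) : `|u| <= nm u.
Proof.
rewrite [leLHS]/Num.norm /= mx_normrE.
apply: bigmax_le => [|ij _]; first exact: enorm_ge0.
by rewrite (ord1 ij.1); exact: coord_le.
Qed.

Lemma coord_le_mx (u : V) i : `|u ord0 i| <= `|u|.
Proof.
rewrite [leRHS]/Num.norm /= mx_normrE.
exact: (le_bigmax _ (fun ij : 'I_1 * 'I_d => `|u ij.1 ij.2|) (ord0, i)).
Qed.

Lemma enorm_le_mx (u : V) : nm u <= d%:R * `|u|.
Proof.
have h1 : dt u u <= d%:R * `|u| ^+ 2.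
  have : dt u u <= \sum_(i < d) `|u| ^+ 2.
    apply: ler_sum => i _; rewrite -expr2 -real_normK ?num_real //.
    by rewrite lerXn2r ?nnegrE ?normr_ge0 ?coord_le_mx.
  by rewrite sumr_const card_ord mulr_natl.
rewrite -[X in _ <= X](@ger0_norm _ (d%:R * `|u|)) ?mulr_ge0 // -sqrtr_sqr /enorm.
rewrite ler_sqrt ?sqr_ge0 //; apply: (le_trans h1).
rewrite exprMn ler_wpM2r ?sqr_ge0 // expr2.
case: d => [|n]; first by rewrite mul0r.
by rewrite ler_peMl // ler1n.
Qed.

Lemma lip_cont (f : V -> R) (k : R) : 0 <= k ->
  (forall u v, `|f u - f v| <= k * nm (u - v)) -> continuous f.
Proof.
move=> k0 H x; apply/(@cvgrPdist_lt _ _ _ (nbhs x) (nbhs_filter x)) => e e0.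
have kd0 : 0 < (k * d%:R + 1) by rewrite ltr_pwDr // mulr_ge0.
have : \forall y \near x, `|x - y| < e / (k * d%:R + 1).
  apply: (@fcvgrPdist_lt R 'rV[R]_d (nbhs x) (nbhs_filter x) x).1; last exact: divr_gt0.
  exact: cvg_id.
apply: filterS => y hy.
apply: (le_lt_trans (H x y)).
apply: (le_lt_trans (ler_wpM2l k0 (enorm_le_mx _))).
rewrite mulrA.
apply: (le_lt_trans (y:= (k * d%:R) * (e / (k * d%:R + 1)))).
  by rewrite ler_wpM2l ?mulr_ge0 // ltW.
rewrite mulrA ltr_pdivrMr // mulrC ltr_pM2l //.
by rewrite ltrDl.
Qed.


Lemma near_enorm (z : V) (e : R) : 0 < e -> \forall y \near z, nm (z - y) < e.
Proof.
move=> e0.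
have kd0 : 0 < (d%:R + 1 : R) by rewrite ltr_pwDr.
have : \forall y \near z, `|z - y| < e / (d%:R + 1).
  apply: (@fcvgrPdist_lt R 'rV[R]_d (nbhs z) (nbhs_filter z) z).1; last exact: divr_gt0.
  exact: cvg_id.
apply: filterS => y hy.
apply: (le_lt_trans (enorm_le_mx _)).
apply: (le_lt_trans (y := d%:R * (e / (d%:R + 1)))).
  by rewrite ler_wpM2l // ltW.
by rewrite mulrA ltr_pdivrMr // mulrC ltr_pM2l // ltrDl.
Qed.

Lemma eclosed_closed (S : set V) : eclosed S -> closed S.
Proof.
move=> hS z hz; apply: hS => e e0.
have [y [Sy hy]] := hz _ (near_enorm z e e0).
by exists y.
Qed.

Lemma closed_fle (f : V -> R) (c : R) : continuous f -> closed [set y | f y <= c].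
Proof.
move=> cf; apply: (@preimage_closed _ _ f [set x | x <= c]) => [y _|]; first exact: cf.
exact: closed_le.
Qed.

Lemma closed_fge (f : V -> R) (c : R) : continuous f -> closed [set y | c <= f y].
Proof.
move=> cf; apply: (@preimage_closed _ _ f [set x | c <= x]) => [y _|]; first exact: cf.
exact: closed_ge.
Qed.

Lemma bnd_set (S : set V) (M : R) : (forall y, S y -> nm y <= M) -> bounded_set S.
Proof.
move=> h; rewrite /bounded_set /= /bounded_near.
near=> r => y Sy /=.
apply: le_trans (mx_le_enorm y) _; apply: le_trans (h y Sy) _.
near: r; apply: nbhs_pinfty_ge; exact: num_real.
Unshelve. all: by end_near.
Qed.

Lemma cont_dist (w : V) : continuous (fun y : V => nm (w - y)).
Proof.
apply: (@lip_cont _ 1) => // u v; rewrite mul1r.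
have h1 : nm (w - u) <= nm (w - v) + nm (v - u).
  by have := enormD (w - v) (v - u); rewrite addrA subrK.
have h2 : nm (w - v) <= nm (w - u) + nm (u - v).
  by have := enormD (w - u) (u - v); rewrite addrA subrK.
rewrite (enormB v u) in h1.
by rewrite ler_norml; apply/andP; split; lra.
Qed.


Lemma enormBle (u v : V) : nm (u - v) <= nm u + nm v.
Proof. by apply: le_trans (enormD _ _) _; rewrite enormN. Qed.

Lemma enorm_tri (u v w : V) : nm (u - w) <= nm (u - v) + nm (v - w).
Proof. by have := enormD (u - v) (v - w); rewrite addrA subrK. Qed.

Definition dA (A : set V) (y : V) : R := inf [set nm (y - a) | a in A].

Lemma dA_le {A : set V} y a : A a -> dA A y <= nm (y - a).
Proof.
move=> Aa; apply: ge_inf; last by exists a.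
by exists 0 => _ [b _ <-]; exact: enorm_ge0.
Qed.

Lemma dA_ge {A : set V} y c : A !=set0 -> (forall a, A a -> c <= nm (y - a)) ->
  c <= dA A y.
Proof.
move=> [a0 Aa0] h; apply: lb_le_inf; first by exists (nm (y - a0)), a0.
by move=> _ [b Ab <-]; exact: h.
Qed.

Lemma dA_nearest {A : set V} {y w : V} : nearest A y w -> dA A y = nm (y - w).
Proof.
move=> [Aw hw]; apply/eqP; rewrite eq_le dA_le //=.
by apply: dA_ge => //; exists w.
Qed.

Lemma dA_cont (A : set V) : A !=set0 -> continuous (dA A).
Proof.
move=> A0; apply: (@lip_cont _ 1) => // u v; rewrite mul1r ler_norml.
have h1 : dA A u <= dA A v + nm (u - v).
  rewrite -lerBlDr; apply: dA_ge => // a Aa; rewrite lerBlDr.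
  apply: le_trans (dA_le u a Aa) _.
  by have := enorm_tri u v a; lra.
have h2 : dA A v <= dA A u + nm (u - v).
  rewrite -lerBlDr; apply: dA_ge => // a Aa; rewrite lerBlDr.
  apply: le_trans (dA_le v a Aa) _.
  by have := enorm_tri v u a; rewrite (enormB v u); lra.
apply/andP; split; lra.
Qed.

Lemma in_UP (A : set V) a z : A a -> ((nm (z - a))%:E < reach A)%E -> UP A z.
Proof.
move=> Aa hz; have [//|nUP] := pselect (UP A z); exfalso.
have h1 : (Defs.edist a (Med A) <= (nm (a - z))%:E)%E.
  by apply: ereal_inf_lbound; exists z.
have h2 : (reach A <= Defs.edist a (Med A))%E.
  by apply: ereal_inf_lbound; exists a.
have := lt_le_trans hz (le_trans h2 h1).
by rewrite enormB ltxx.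
Qed.

Lemma almost_nearest (A : set V) y w (eta : R) : eclosed A ->
  nearest A y w -> (forall w', nearest A y w' -> w' = w) -> 0 < eta ->
  exists2 k : R, 0 < k & forall a, A a -> nm (y - a) < nm (y - w) + k ->
    nm (w - a) < eta.
Proof.
move=> cA [Aw hw] uw eta0.
set del := nm (y - w).
pose K := A `&` [set a | eta <= nm (w - a)] `&` [set a | nm (y - a) <= del + 1].
have [[a0 Ka0]|K0] := pselect (K !=set0); last first.
  exists 1 => // a Aa ha; rewrite ltNge; apply/negP => hea.
  by apply: K0; exists a; split; [split|rewrite /= ltW].
have cK : compact K.
  apply: bounded_closed_compact.
    apply: (@bnd_set _ (nm y + (del + 1))) => a [[_ _] /= ha].
    have := enormBle y (y - a); rewrite opprB addrC subrK; lra.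
  apply: closedI; first apply: closedI.
  - exact: eclosed_closed.
  - exact: closed_fge (cont_dist w).
  - exact: closed_fle (cont_dist y).
have [a1 a1K a1min] := EVT_min_rV (f := fun a => nm (y - a)) (ex_intro _ a0 Ka0) cK
  (continuous_subspaceT (cont_dist y)).
rewrite in_setE in a1K; case: a1K => [[Aa1 /= ea1] da1].
have gt : del < nm (y - a1).
  rewrite lt_neqAle hw // andbT; apply/negP => /eqP e.
  have : a1 = w by apply: uw; split => // a Aa; rewrite -e hw.
  by move=> ea; move: ea1; rewrite ea subrr enorm0 leNgt eta0.
exists (Num.min 1 (nm (y - a1) - del)).
  by rewrite lt_min ltr01 subr_gt0.
move=> a Aa ha; rewrite ltNge; apply/negP => hea.
have Ka : K a.
  split; first by split.
  by rewrite /= ltW //; apply: (lt_le_trans ha); rewrite lerD2l ge_min lexx.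
have := a1min a; rewrite in_setE => /(_ Ka) h.
have : nm (y - a) < nm (y - a1).
  apply: (lt_le_trans ha); rewrite -lerBrDl ge_min lexx orbT //.
by rewrite ltNge h.
Qed.


Lemma le_enorm_r (u : V) (h : R) : 0 <= h -> (nm u <= h) = (dt u u <= h ^+ 2).
Proof.
by move=> h0; rewrite -(ler_pXn2r (_ : 0 < 2)%N) ?nnegrE ?enorm_ge0 // enorm_sq.
Qed.

Lemma key (A : set V) (q c : V) (T rho : R) :
  eclosed A -> A q -> 0 < T -> 0 < rho ->
  nm (c - q) = T ->
  (forall a, A a -> T <= nm (c - a)) ->
  (forall z, nm (z - q) <= T + rho -> UP A z) ->
  exists2 h : R, 0 < h & forall a, A a -> T + h <= nm (c + (h / T) *: (c - q) - a).
Proof.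
move=> cA Aq T0 rho0 cq hc hUP.
have A0 : A !=set0 by exists q.
set h := Num.min T rho.
have h0 : 0 < h by rewrite lt_min T0 rho0.
have hT : h <= T by rewrite ge_min lexx.
have hr : h <= rho by rewrite ge_min lexx orbT.
pose B := [set y | nm (c - y) <= h].
have cB : compact B.
  apply: bounded_closed_compact.
    apply: (@bnd_set _ (nm c + h)) => y /= hy.
    have := enormBle c (c - y); rewrite opprB addrC subrK; move: hy; rewrite /B /=; lra.
  exact: closed_fle (cont_dist c).
have Bc : B c by rewrite /B /= subrr enorm0 ltW.
have [ys ysB ysmax] := EVT_max_rV (f := dA A) (ex_intro _ c Bc) cB
  (continuous_subspaceT (dA_cont A A0)).
rewrite in_setE /B /= in ysB.
have nearc : nearest A c q by split => // a Aa; rewrite cq hc.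
have hys : nm (ys - q) <= T + rho.
  have := enorm_tri ys c q; rewrite (enormB ys c) cq; lra.
have [w [[Aw hw] uw]] := hUP ys hys.
set del := nm (ys - w).
have dAys : dA A ys = del by apply: dA_nearest; split.
have dAc : dA A c = T by rewrite (dA_nearest nearc).
have Tdel : T <= del by rewrite -dAc -dAys; apply: ysmax; rewrite in_setE.
have del0 : 0 < del by lra.
set n := del^-1 *: (ys - w).
set nu := h^-1 *: (ys - c).
set v := n - nu.
have nn : dt n n = 1.
  rewrite /n edotZl edotZr -enorm_sq -/del; field; lra.
have nunu : dt nu nu <= 1.
  rewrite /nu edotZl edotZr -enorm_sq mulrA -invfM -expr2 mulrC.
  rewrite ler_pdivrMr ?exprn_gt0 // mul1r enorm_sq -le_enorm_r ?(ltW h0) //.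
  by rewrite enormB.
have ysw : ys - w = del *: n by rewrite /n scalerA mulfV ?scale1r // gt_eqF.
have ysc : ys - c = h *: nu by rewrite /nu scalerA mulfV ?scale1r // gt_eqF.
have [v0|vn0] := eqVneq v 0.
  have enu : n = nu by apply/eqP; rewrite -subr_eq0 -/v v0.
  set s := h / del.
  have e1 : ys - c = s *: (ys - w).
    by rewrite ysc -enu /n scalerA /s.
  have ec : c = ys - s *: (ys - w) by rewrite -e1 opprB addrC subrK.
  have ecw : c - w = (1 - s) *: (ys - w).
    by rewrite {1}ec scalerBl scale1r addrAC.
  have s1 : 0 <= 1 - s by rewrite subr_ge0 /s ler_pdivrMr // mul1r; lra.
  have nmcw : nm (c - w) = del - h.
    by rewrite ecw enormZ ger0_norm // -/del /s; field; lra.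
  have nearcw : nearest A c w.
    split => // a Aa.
    have := enorm_tri ys c a; have := hw a Aa; rewrite (enormB ys c) nmcw -/del.
    lra.
  have hcU : nm (c - q) <= T + rho by rewrite cq; lra.
  have [q' [_ uq']] := hUP c hcU.
  have wq : w = q by rewrite (uq' _ nearcw) (uq' _ nearc).
  have Tdh : T = del - h by rewrite -cq -wq nmcw.
  exists h => // a Aa.
  have -> : c + (h / T) *: (c - q) = ys.
    rewrite -wq ecw scalerA.
    have -> : h / T * (1 - s) = s by rewrite Tdh /s; field; lra.
    by rewrite ec subrK.
  by rewrite Tdh subrK; apply: hw.
exfalso.
have vdef : v = n - nu by [].
clearbody v n nu.
set m := dt v v.
have m0 : 0 < m.
  rewrite lt_neqAle edot_ge0 andbT eq_sym; apply/negP => /eqP m0.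
  by move: vn0; rewrite (edot_eq0 _ m0) eqxx.
set al := dt nu n.
have vn : dt v n = 1 - al by rewrite vdef edotBl nn.
have mE : m = 1 - 2 * al + dt nu nu by rewrite /m vdef enormB_sq nn edotC.
have vnpos : m / 2 <= dt v n by rewrite vn; lra.
have nuv : dt nu v = al - dt nu nu by rewrite vdef edotBr.
have inB : forall e, 0 <= e <= h -> nm (c - (ys + e *: v)) <= h.
  move=> e /andP [e0 eh].
  have -> : c - (ys + e *: v) = - (h *: nu + e *: v).
    by rewrite -ysc !opprD !opprK addrA; congr (_ - _); rewrite addrC.
  rewrite enormN le_enorm_r ?(ltW h0) // enormD_sq !(edotZl, edotZr) -/m.
  rewrite nuv.
  have h1 : 0 <= (1 - dt nu nu) * h * (h - e) by apply: mulr_ge0; [apply: mulr_ge0|]; lra.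
  have h2 : 0 <= e * m * (h - e) by apply: mulr_ge0; [apply: mulr_ge0|]; lra.
  nra.
have nv0 : 0 < nm v by rewrite /enorm sqrtr_gt0.
set eta := del * m / (2 * nm v).
have eta0 : 0 < eta by rewrite /eta divr_gt0 // mulr_gt0.
have [k k0 hk] := almost_nearest A ys w eta cA (conj Aw hw) uw eta0.
set e := Num.min h (k / (2 * nm v)).
have e0 : 0 < e by rewrite lt_min h0 divr_gt0 // mulr_gt0.
have eh : e <= h by rewrite ge_min lexx.
have ek : e * nm v <= k / 2.
  have : e <= k / (2 * nm v) by rewrite ge_min lexx orbT.
  rewrite ler_pdivlMr ?mulr_gt0 //; lra.
set ye := ys + e *: v.
have yeB : nm (c - ye) <= h by apply: inB; rewrite ltW.
have yeq : nm (ye - q) <= T + rho.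
  have := enorm_tri ye c q; rewrite (enormB ye c) cq; lra.
have [we [[Awe hwe] _]] := hUP ye yeq.
have dAye : dA A ye = nm (ye - we) by apply: dA_nearest; split.
have h1 : nm (ye - we) <= del.
  by rewrite -dAye -dAys; apply: ysmax; rewrite in_setE.
have h2 : del <= nm (ys - we) by apply: hw.
have h3 : dt (ys - we) v < 0.
  have : dt (ye - we) (ye - we) <= del ^+ 2 by rewrite -le_enorm_r ?(ltW del0).
  have -> : ye - we = (ys - we) + e *: v by rewrite /ye addrAC.
  rewrite enormD_sq !(edotZl, edotZr) -/m.
  have : del ^+ 2 <= dt (ys - we) (ys - we).
    by rewrite -enorm_sq !expr2; apply: (ler_pM (ltW del0) (ltW del0) h2 h2).
  move=> ha hb.
  have : e * (2 * dt (ys - we) v + e * m) <= 0 by nra.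
  rewrite pmulr_rle0 // => hc2.
  have : 0 < e * m by rewrite mulr_gt0.
  lra.
have h4 : del * (m / 2) <= dt (ys - w) v.
  by rewrite ysw edotZl edotC ler_wpM2l // ltW.
have h5 : dt (we - w) v = dt (ys - w) v - dt (ys - we) v.
  by rewrite -edotBl opprB [in RHS]addrC addrA subrK.
have h6 : del * (m / 2) < nm (we - w) * nm v.
  by apply: (lt_le_trans _ (CS _ _)); rewrite h5; lra.
have h7 : eta < nm (w - we).
  by rewrite enormB /eta ltr_pdivrMr ?mulr_gt0 //; nra.
have h8 : nm (ys - we) < del + k.
  have := enorm_tri ys ye we.
  have -> : ys - ye = - (e *: v) by rewrite /ye opprD addrA subrr add0r.
  rewrite enormN enormZ ger0_norm ?(ltW e0) //.
  lra.
have := hk we Awe h8; rewrite -/del.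
by rewrite ltNge (ltW h7).
Qed.



Lemma reach_gap (A : set V) (T : R) : (T%:E < reach A)%E ->
  exists2 rho : R, 0 < rho & ((T + rho)%:E < reach A)%E.
Proof.
case: (reach A) => [tau||] //= h.
- exists ((tau - T) / 2); first by rewrite divr_gt0 // subr_gt0 -lte_fin.
  by rewrite lte_fin; move: h; rewrite lte_fin; lra.
- by exists 1 => //; exact: ltry.
Qed.

Lemma ray (A : set V) (q p : V) : eclosed A -> A q -> p != q -> nearest A p q ->
  forall t, 0 <= t -> (t%:E < reach A)%E ->
  forall a, A a -> t <= nm (q + (t / nm (p - q)) *: (p - q) - a).
Proof.
move=> cA Aq pq [_ hpq].
set r := nm (p - q).
have r0 : 0 < r.
  rewrite lt_neqAle enorm_ge0 andbT eq_sym; apply/negP => /eqP /enorm_eq0.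
  by move/eqP; rewrite subr_eq0 (negbTE pq).
set X := p - q.
pose c t := q + (t / r) *: X.
pose P t := forall a, A a -> t <= nm (c t - a).
have ncq : forall t, 0 <= t -> nm (c t - q) = t.
  move=> t t0; rewrite /c addrAC subrr add0r enormZ ger0_norm ?divr_ge0 ?(ltW r0) //.
  by rewrite -/r mulfVK // gt_eqF.
have cc : forall t1 t2 : R, nm (c t1 - c t2) = `|t1 - t2|.
  move=> t1 t2; rewrite /c opprD addrACA subrr add0r -scalerBl.
  by rewrite enormZ -mulrBl normrM (ger0_norm (_ : 0 <= r^-1)) ?invr_ge0 ?(ltW r0) // -/r divfK // gt_eqF.
have F2 : forall t1 t2, P t1 -> 0 <= t2 <= t1 -> P t2.
  move=> t1 t2 Pt /andP [t'0 tt'] a Aa.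
  have := enorm_tri (c t1) (c t2) a; rewrite cc ger0_norm ?subr_ge0 //.
  have := Pt a Aa; lra.
have P0 : P r.
  move=> a Aa; rewrite /c mulfV ?gt_eqF // scale1r /X addrCA subrr addr0.
  by rewrite /r; apply: hpq.
move=> t0 t00 t0R; apply: contrapT => nP.
pose S := [set t | 0 <= t /\ P t].
have Sub : forall t, S t -> t <= t0.
  move=> t [t_0 Pt]; rewrite leNgt; apply/negP => tt0; apply: nP.
  by apply: F2 Pt _; rewrite t00 ltW.
have Sne : S !=set0 by exists r; split; [exact: ltW|].
have hS : has_sup S by split; [|exists t0 => t /Sub].
set T := sup S.
have rT : r <= T by apply: sup_upper_bound => //; split; [exact: ltW|].
have T0 : 0 < T by apply: lt_le_trans rT.
have Tt0 : T <= t0 by apply: ge_sup => // t /Sub.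
have below : forall t, 0 <= t < T -> P t.
  move=> t /andP [t_0 tT].
  have tT2 : 0 < T - t by rewrite subr_gt0.
  have [s [s0 Ps] hs] := sup_adherent tT2 hS.
  by apply: F2 Ps _; rewrite t_0 /=; move: hs; rewrite -/T; lra.
have PT : P T.
  move=> a Aa; rewrite leNgt; apply/negP => hlt.
  set xx := nm (c T - a) in hlt.
  have xx0 : 0 <= xx by apply: enorm_ge0.
  set t := (3 * T + xx) / 4.
  have Pt : P t by apply: below; apply/andP; split; rewrite /t; lra.
  have := Pt a Aa; have := enorm_tri (c t) (c T) a; rewrite cc -/xx.
  rewrite ler0_norm; last by rewrite /t; lra.
  rewrite /t; lra.
have TR : (T%:E < reach A)%E by apply: le_lt_trans t0R; rewrite lee_fin.
have [rho rho0 hrho] := reach_gap A T TR.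
have hUP : forall z, nm (z - q) <= T + rho -> UP A z.
  by move=> z hz; apply: (in_UP A q z Aq); apply: le_lt_trans hrho; rewrite lee_fin.
have [h h0 hh] := key A q (c T) T rho cA Aq T0 rho0 (ncq T (ltW T0)) PT hUP.
have PTh : P (T + h).
  move=> a Aa; have := hh a Aa.
  have -> : c T + (h / T) *: (c T - q) = c (T + h).
    have e : c T - q = (T / r) *: X by rewrite /c addrAC subrr add0r.
    rewrite e scalerA /c -addrA -scalerDl.
    by congr (_ + _ *: _); field; rewrite (gt_eqF r0) (gt_eqF T0).
  by [].
have : T + h <= T by apply: sup_upper_bound => //; split; [lra|].
lra.
Qed.


Lemma seg_id (q p x : V) (t : R) :
  (1 - t) *: q + t *: p - x = (q - x) + t *: (p - q).
Proof. by apply/rowP => i; rewrite !mxE; ring. Qed.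

Lemma seg_id2 (q p : V) (t : R) : (1 - t) *: q + t *: p - q = t *: (p - q).
Proof. by apply/rowP => i; rewrite !mxE; ring. Qed.

Lemma nm_eq_sq (u : V) (e : R) : 0 <= e -> (nm u = e) <-> (dt u u = e ^+ 2).
Proof.
move=> e0; split => [<-|h]; first by rewrite enorm_sq.
by rewrite /enorm h sqrtr_sqr ger0_norm.
Qed.

Lemma sq_le (a b : R) : 0 <= a -> a <= b -> a ^+ 2 <= b ^+ 2.
Proof. by move=> a0 ab; rewrite !expr2 ler_pM. Qed.

Lemma roots_eq {D B r2 e2 l1 l2 : R} : 0 < r2 -> D + 2 * B + r2 < e2 ->
  0 <= l1 <= 1 -> 0 <= l2 <= 1 ->
  D + 2 * l1 * B + l1 ^+ 2 * r2 = e2 -> D + 2 * l2 * B + l2 ^+ 2 * r2 = e2 ->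
  l1 = l2.
Proof.
move=> r0 g1 /andP [l10 l11] /andP [l20 l21] e1 e2'.
have [//|ne] := eqVneq l1 l2; exfalso.
have hB : 2 * B = - r2 * (l1 + l2).
  have : (l1 - l2) * (2 * B + r2 * (l1 + l2)) = 0.
    by rewrite -[LHS]subr0; apply/eqP; rewrite subr_eq0; apply/eqP; nra.
  move/eqP; rewrite mulf_eq0 subr_eq0 (negbTE ne) /=.
  by rewrite addr_eq0 => /eqP ->; rewrite mulNr.
have : 0 <= r2 * ((1 - l1) * (1 - l2)) by apply: mulr_ge0; [lra|apply: mulr_ge0; lra].
nra.
Qed.


Lemma main_sec (A X : set V) (taubar delta eps : R) (x q p : V) :
  eclosed A ->
  (0 < reach A)%E ->
  0 < taubar -> (taubar%:E <= reach A)%E ->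
  finite_set X -> X `<=` A -> dense_in X A delta -> delta < taubar / 4 ->
  X x ->
  0 < eps -> (eps%:E < reach A)%E ->
  A q ->
  eball x eps p -> UPq A q p ->
  ~ eball x eps q ->
  (exists! y, esphere x eps y /\ segment q p y) /\
  (forall y, esphere x eps y -> segment q p y ->
     ((enorm (y - q))%:E <= (eps ^+ 2)%:E / reach A)%E).
Proof.
move=> cA reach0 _ _ _ XA _ _ Xx eps0 epsR Aq pB [nearpq _] qnB.
have Ax : A x := XA x Xx.
have hq : eps <= nm (q - x) by rewrite leNgt; apply/negP.
have hp : nm (p - x) < eps := pB.
have pq : p != q by apply/eqP => e; apply: qnB; rewrite -e.
case: nearpq => _ hpq.
set W := p - q.
set r := nm W.
have r0 : 0 < r.
  rewrite lt_neqAle enorm_ge0 andbT eq_sym; apply/negP => /eqP /enorm_eq0.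
  by move/eqP; rewrite subr_eq0 (negbTE pq).
have reps : r < eps by apply: le_lt_trans (hpq x Ax) hp.
set r2 := dt W W.
have r2E : r2 = r ^+ 2 by rewrite enorm_sq.
set D2 := dt (q - x) (q - x).
set B := dt (q - x) W.
have gE : forall t, dt ((1 - t) *: q + t *: p - x) ((1 - t) *: q + t *: p - x)
    = D2 + 2 * t * B + t ^+ 2 * r2.
  move=> t; rewrite seg_id enormD_sq !(edotZl, edotZr) -/W -/D2 -/B -/r2.
  by rewrite expr2; ring.
have D2e : eps ^+ 2 <= D2 by rewrite /D2 -enorm_sq sq_le // ltW.
have g1 : D2 + 2 * B + r2 < eps ^+ 2.
  have := gE 1; rewrite subrr scale0r add0r scale1r expr1n mulr1 mul1r => <-.
  by rewrite -enorm_sq (ltr_pXn2r (_ : 0 < 2)%N) ?nnegrE ?enorm_ge0 ?(ltW eps0).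
have r2pos : 0 < r2 by rewrite r2E exprn_gt0.
have segP : forall y, segment q p y -> exists2 t : R, 0 <= t <= 1 &
    y = (1 - t) *: q + t *: p by move=> y [t ht ->]; exists t.
have sphP : forall t : R, esphere x eps ((1 - t) *: q + t *: p) <->
    D2 + 2 * t * B + t ^+ 2 * r2 = eps ^+ 2.
  move=> t; rewrite -gE; exact: nm_eq_sq (ltW eps0).
split.
  set Del := B ^+ 2 - r2 * (D2 - eps ^+ 2).
  have hg1 : 0 < r2 * (eps ^+ 2 - (D2 + 2 * B + r2)) by rewrite mulr_gt0 // subr_gt0.
  have hB2 := sqr_ge0 (B + r2).
  have DelE : Del = (B + r2) ^+ 2 + r2 * (eps ^+ 2 - (D2 + 2 * B + r2)) by rewrite /Del; ring.
  have Del0 : 0 <= Del by rewrite DelE; lra.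
  set S := Num.sqrt Del.
  have S0 : 0 <= S := sqrtr_ge0 _.
  have S2 : S ^+ 2 = Del by rewrite sqr_sqrtr.
  set l := (- B - S) / r2.
  have rl : r2 * l = - B - S by rewrite /l mulrC divfK // gt_eqF.
  have gl : D2 + 2 * l * B + l ^+ 2 * r2 = eps ^+ 2.
    have r2n0 : r2 != 0 by rewrite gt_eqF.
    apply: (mulfI r2n0).
    have -> : r2 * (D2 + 2 * l * B + l ^+ 2 * r2) =
      (r2 * l) ^+ 2 + 2 * B * (r2 * l) + r2 * D2 by ring.
    rewrite rl; nra.
  have l0 : 0 <= l.
    have Bn : B < 0 by lra.
    have hS : S <= - B.
      have : S ^+ 2 <= (- B) ^+ 2 by rewrite sqrrN S2 /Del; nra.
      by rewrite (ler_pXn2r (_ : 0 < 2)%N) ?nnegrE ?oppr_ge0 ?(ltW Bn).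
    rewrite /l divr_ge0 ?(ltW r2pos) //; lra.
  have l1 : l <= 1.
    rewrite /l ler_pdivrMr // mul1r.
    have : (B + r2) ^+ 2 < S ^+ 2 by rewrite S2 DelE; lra.
    have [Bp|Bp] := leP 0 (- B - r2); last by lra.
    rewrite -sqrrN opprD (ltr_pXn2r (_ : 0 < 2)%N) ?nnegrE //.
    lra.
  exists ((1 - l) *: q + l *: p); split.
    split; last by exists l => //; rewrite l0 l1.
    by apply/sphP.
  move=> y' [sy' /segP [t ht ey']].
  rewrite ey' in sy' *.
  have gt : D2 + 2 * t * B + t ^+ 2 * r2 = eps ^+ 2 by apply/sphP.
  have hl : 0 <= l <= 1 by rewrite l0 l1.
  by rewrite (roots_eq r2pos g1 ht hl gt gl).
move=> y sy /segP [t /andP [t0 t1] ey].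
rewrite ey in sy *.
have gt : D2 + 2 * t * B + t ^+ 2 * r2 = eps ^+ 2 by apply/sphP.
rewrite seg_id2 -/W enormZ ger0_norm // -/r.
have key2 : forall tau, 0 < tau -> (tau%:E < reach A)%E -> t * r * tau <= eps ^+ 2.
  move=> tau tau0 tauR.
  have := ray A q p cA Aq pq (conj Aq hpq) tau (ltW tau0) tauR x Ax.
  rewrite -/W -/r => h.
  have h2 : tau ^+ 2 <= dt (q + (tau / r) *: W - x) (q + (tau / r) *: W - x).
    by rewrite -enorm_sq sq_le // ltW.
  have e : q + (tau / r) *: W - x = (q - x) + (tau / r) *: W.
    by rewrite addrAC.
  rewrite e enormD_sq !(edotZl, edotZr) -/D2 -/B -/r2 r2E in h2.
  set mu := tau / r in h2.
  have mu0 : 0 < mu by rewrite divr_gt0.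
  have taumu : tau = mu * r by rewrite /mu divfK // gt_eqF.
  have hmu : 0 <= D2 + 2 * mu * B.
    have : tau ^+ 2 = mu * (mu * r ^+ 2) by rewrite taumu; ring.
    move=> e2; rewrite e2 in h2; nra.
  rewrite taumu.
  have -> : t * r * (mu * r) = t * mu * r2 by rewrite r2E; ring.
  have [tmu|tmu] := leP t mu.
    have h3 : mu * eps ^+ 2 >= (mu - t) * D2 + t ^+ 2 * mu * r2.
      rewrite -gt; nra.
    have h4 : t * eps ^+ 2 >= t ^+ 2 * mu * r2.
      have : (mu - t) * eps ^+ 2 <= (mu - t) * D2 by rewrite ler_wpM2l // subr_ge0.
      nra.
    have [t00|tpos] := eqVneq t 0; first by rewrite t00 !mul0r sqr_ge0.
    have tp : 0 < t by rewrite lt_neqAle eq_sym tpos t0.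
    have : t * (t * mu * r2) <= t * eps ^+ 2 by move: h4; rewrite expr2 !mulrA.
    by rewrite ler_pM2l.
  have : r2 < eps ^+ 2 by rewrite r2E (ltr_pXn2r (_ : 0 < 2)%N) ?nnegrE ?(ltW r0) ?(ltW eps0).
  have htm : t * mu <= 1 by rewrite -[1]mulr1; apply: ler_pM; lra.
  have := ler_wpM2r (ltW r2pos) htm; rewrite mul1r.
  lra.
set s := t * r in key2 *.
have s0 : 0 <= s by rewrite mulr_ge0 // ltW.
have e20 : 0 < eps ^+ 2 by rewrite exprn_gt0.
move: key2 epsR reach0; case: (reach A) => [tau||] // key2 _ tau0.
  rewrite lte_fin in tau0.
  rewrite inver gt_eqF // -EFinM lee_fin ler_pdivlMr //.
  rewrite leNgt; apply/negP => hlt.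
  have sp : 0 < s.
    rewrite lt_neqAle s0 andbT eq_sym; apply/negP => /eqP s00.
    by move: hlt; rewrite s00 mul0r ltNge (ltW e20).
  have q1 : eps ^+ 2 / s < tau by rewrite ltr_pdivrMr // mulrC.
  set tau' := (tau + eps ^+ 2 / s) / 2.
  have t'0 : 0 < tau' by rewrite /tau' divr_gt0 // addr_gt0 // divr_gt0.
  have := key2 tau' t'0; rewrite lte_fin => /(_ ltac:(rewrite /tau'; lra)).
  have : eps ^+ 2 < s * tau'.
    rewrite -ltr_pdivrMl // mulrC; rewrite /tau'; lra.
  lra.
rewrite invey mule0 lee_fin leNgt; apply/negP => sp.
have := key2 (2 * eps ^+ 2 / s) ltac:(rewrite divr_gt0 // mulr_gt0) (ltry _).
rewrite mulrCA divff ?gt_eqF // mulr1.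
lra.
Qed.

End Eucl.

Theorem mainTheorem15 (R : realType) (d : nat) (A X : set 'rV[R]_d)
  (taubar delta eps : R) (x q p : 'rV[R]_d) :
  eclosed A ->
  (0 < reach A)%E ->
  0 < taubar -> (taubar%:E <= reach A)%E ->
  finite_set X -> X `<=` A -> dense_in X A delta -> delta < taubar / 4 ->
  X x ->
  0 < eps -> (eps%:E < reach A)%E ->
  A q ->
  eball x eps p -> UPq A q p ->
  ~ eball x eps q ->
  (exists! y, esphere x eps y /\ segment q p y) /\
  (forall y, esphere x eps y -> segment q p y ->
     ((enorm (y - q))%:E <= (eps ^+ 2)%:E / reach A)%E).
Proof. exact: (@main_sec R d A X taubar delta eps x q p). Qed.
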